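(* Consider an instance of the destructive weighted-\$-protection problem and let $\mathcal{V}_F\subseteq\mathcal{V}$ be a set of awarded voters. Suppose the attacker succeeds (i.e., makes some candidate $c\neq c_m$ obtain a total score strictly higher than $c_m$) by bribing a set $\mathcal{V}_B\subseteq\mathcal{V}\setminus\mathcal{V}_F$ with $\sum_{v_j\in\mathcal{V}_B}p_j^b\le B$. If $v_{j'}\prec v_j$, $v_{j'}\in\mathcal{V}_B$ and $v_j\notin\mathcal{V}_F\cup\mathcal{V}_B$, then the attacker can also succeed by bribing $(\mathcal{V}_B\setminus\{v_{j'}\})\cup\{v_j\}$ (within budget $B$).
   Context: Election model. Candidates $\mathcal{C}=\{c_1,\dots,c_m\}$, voters $\mathcal{V}=\{v_1,\dots,v_n\}$; voter $v_j$ has a preference list $\tau_j$ (a linear order of $\mathcal{C}$), weight $w_j\in\mathbb{Z}_{>0}$, awarding price $p_j^a\in\mathbb{Z}_{>0}$, bribing price $p_j^b\in\mathbb{Z}_{>0}$. A scoring rule $\alpha=(\alpha_1\ge\cdots\ge\alpha_m)$ of nonnegative integers gives the candidate at position $z$ of $v_j$'s list $w_j\alpha_z$ points; total score is the sum over voters. In the destructive weighted-\$-protection problem, $c_m$ has maximum total score without bribery; there is a defense budget $F$ and an attack budget $B$; the attacker may choose $\mathcal{V}_B\subseteq\mathcal{V}\setminus\mathcal{V}_F$ with total bribing price at most $B$ and replace each list in $\mathcal{V}_B$ by an arbitrary list; it succeeds if some $c\neq c_m$ gets a strictly higher total score than $c_m$. Dominance: $v_{j'}\prec v_j$ ($v_j$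 dominates $v_{j'}$) if either (i) $\tau_j=\tau_{j'}$, $w_j\ge w_{j'}$, $p_j^a\le p_{j'}^a$, $p_j^b\le p_{j'}^b$ with at least one of these three inequalities strict; or (ii) $\tau_j=\tau_{j'}$, $w_j=w_{j'}$, $p_j^a=p_{j'}^a$, $p_j^b=p_{j'}^b$ and $j'<j$. *)

(* Defs.v *)
From mathcomp Require Import all_boot all_order all_fingroup.
Set Implicit Arguments. Unset Strict Implicit. Unset Printing Implicit Defensive.

(* Candidates: 'I_m.+1 (c_1..c_m are ordinals 0..m-1; c_m is ord_max).  A preference list of a voter is a permutation
   tau : {perm 'I_m.+1} where tau z is the candidate at position z
   (position 0 = top). *)

Definition profile (m n : nat) := 'I_n -> {perm 'I_m.+1}.

Definition score (m n : nat) (alpha : 'I_m.+1 -> nat) (w : 'I_n -> nat)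
    (tau : profile m n) (c : 'I_m.+1) : nat :=
  \sum_(j < n) w j * alpha (((tau j)^-1)%g c).

Definition scoring_rule (m : nat) (alpha : 'I_m.+1 -> nat) : Prop :=
  forall z1 z2 : 'I_m.+1, (z1 <= z2)%N -> (alpha z2 <= alpha z1)%N.

Definition attack_succeeds (m n : nat) (alpha : 'I_m.+1 -> nat)
    (w pb : 'I_n -> nat) (tau : profile m n) (B : nat)
    (VF VB : {set 'I_n}) : Prop :=
  [disjoint VB & VF] /\
  (\sum_(j in VB) pb j <= B)%N /\
  exists tau' : profile m n,
    (forall j, j \notin VB -> tau' j = tau j) /\
    exists c : 'I_m.+1, c != ord_max /\
      (score alpha w tau' ord_max < score alpha w tau' c)%N.

Definition dominated (m n : nat) (tau : profile m n) (w pa pb : 'I_n -> nat)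
    (j' j : 'I_n) : Prop :=
  (tau j = tau j' /\ (w j' <= w j)%N /\ (pa j <= pa j')%N /\ (pb j <= pb j')%N
     /\ ((w j' < w j)%N \/ (pa j < pa j')%N \/ (pb j < pb j')%N))
  \/
  (tau j = tau j' /\ w j = w j' /\ pa j = pa j' /\ pb j = pb j' /\ (j' < j)%N).

(* Main.v *)
Require Import Defs.
From mathcomp Require Import all_boot all_order all_fingroup.
From mathcomp Require Import zify.

Theorem lemma5 (m n : nat) (alpha : 'I_m.+1 -> nat) (tau : profile m n)
    (w pa pb : 'I_n -> nat) (F B : nat) (VF VB : {set 'I_n}) (j' j : 'I_n) :
  scoring_rule alpha ->
  (forall k, 0 < w k)%N -> (forall k, 0 < pa k)%N -> (forall k, 0 < pb k)%N ->
  (forall c, score alpha w tau c <= score alpha w tau ord_max)%N ->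
  (\sum_(k in VF) pa k <= F)%N ->
  attack_succeeds alpha w pb tau B VF VB ->
  dominated tau w pa pb j' j ->
  j' \in VB ->
  j \notin VF :|: VB ->
  attack_succeeds alpha w pb tau B VF ((VB :\ j') :|: [set j]).
Proof.
move=> Hal _ _ _ _ _ [Hdis [Hbud [tau' [Htau' [c [Hc Hsc]]]]]] Hdom Hj' Hj.
have [Htj [Hw Hpb]] : tau j = tau j' /\ (w j' <= w j)%N /\ (pb j <= pb j')%N.
  case: Hdom => [[? [? [? [? _]]]]|[? [? [? [? _]]]]]; split => //; split; lia.
move: Hj; rewrite in_setU negb_or => /andP [HjF HjB].
have Hjj' : j != j' by apply/eqP => E; rewrite E Hj' in HjB.
set VB' := (VB :\ j') :|: [set j].
have HjV : j \in VB' by rewrite in_setU in_set1 eqxx orbT.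
have Hj'V : j' \notin VB' by rewrite in_setU in_set1 in_setD1 eqxx /= eq_sym (negbTE Hjj').
split.
  rewrite -setI_eq0; apply/eqP/setP => k; rewrite !inE.
  case: (boolP (k == j)) => [/eqP -> | Hk]; first by rewrite (negbTE HjF) andbF.
  rewrite orbF; case: (boolP (k \in VB)) => Hk2; last by rewrite andbF.
  by rewrite (disjointFr Hdis Hk2) andbF.
split.
  rewrite /VB' setUC big_setU1 /=; last by rewrite in_setD1 negb_and HjB orbT.
  move: Hbud; rewrite (big_setD1 j' Hj') /= => H; apply: leq_trans H; by rewrite leq_add2r.
have Hm : (0 < m)%N.
  move: (ltn_ord c) Hc; rewrite -val_eqE /=; lia.
have H0m : (ord0 : 'I_m.+1) != ord_max by rewrite -val_eqE /=; lia.
pose s : {perm 'I_m.+1} := tperm ord0 c.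
have Hsc' : (s^-1)%g c = ord0 by rewrite tpermV tpermR.
have Hsm : (s^-1)%g ord_max = ord_max by rewrite tpermV tpermD // eq_sym.
pose T : profile m n := fun k => if k \in VB' then s else tau k.
have Ha0 : forall z, (alpha z <= alpha ord0)%N by move=> z; apply: Hal.
have Ham : forall z, (alpha ord_max <= alpha z)%N by move=> z; apply: Hal; apply: leq_ord.
exists T; split.
  move=> k Hk; rewrite /T (negbTE Hk).
  by [].
exists c; split => //.
move: Hsc; rewrite /score.
have Hsplit : forall (f : 'I_n -> nat), \sum_(i < n) f i =
   f j + (f j' + \sum_(i < n | (i != j) && (i != j')) f i).
  by move=> f; rewrite (bigD1 j) //= (bigD1 j') //= eq_sym.
rewrite !Hsplit.
rewrite /T HjV (negbTE Hj'V) Hsc' Hsm (Htau' j HjB) Htj.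
set R1 := \sum_(i < n | _) _.
set R2 := \sum_(i < n | _) _.
set R3 := \sum_(i < n | _) _.
set R4 := \sum_(i < n | _) _.
have HR : (R3 + R2 <= R1 + R4)%N.
  rewrite /R1 /R2 /R3 /R4 -!big_split /=; apply: leq_sum => k /andP [Hkj Hkj'].
  case: (boolP (k \in VB)) => Hk.
    have -> : k \in VB' by rewrite in_setU in_setD1 Hkj' Hk.
    rewrite Hsc' Hsm.
    have := Ha0 (((tau' k)^-1)%g c); have := Ham (((tau' k)^-1)%g ord_max).
    move=> h1 h2; rewrite leq_add // leq_mul2l ?h1 ?h2 ?orbT //.
  have -> : (k \in VB') = false by rewrite in_setU in_setD1 in_set1 (negbTE Hk) (negbTE Hkj) andbF.
  by rewrite (Htau' k Hk).
have := Ha0 (((tau' j')^-1)%g c); have := Ham (((tau' j')^-1)%g ord_max).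
have := Ha0 (((tau j')^-1)%g ord_max); have := Ham (((tau j')^-1)%g c).
have := Ha0 (((tau j')^-1)%g c); have := Ham (((tau j')^-1)%g ord_max).
move: HR Hw.
set p := alpha _. set q := alpha _. set r := alpha _. set t := alpha _.
set a0 := alpha ord0. set am := alpha ord_max.
move=> *. nia.
Qed.
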